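(* Assume the reduced model family $(V_k)_{k=1,\dots,K}$ is $(\varepsilon,\mu)$-admissible for some $\varepsilon>0$ and $\mu\ge1$. Let $u\in V$ satisfy $\operatorname{dist}(u,\mathcal M)\le\varepsilon_{model}$. Let the observation be $w=P_Wu+\eta$ with $\eta\in W$ and $\|\eta\|\le\varepsilon_{noise}$. Then the estimator obtained by surrogate model selection satisfies $$\|u-u^*(w)\|\le\delta_{\kappa\rho}+\varepsilon_{noise},\qquad \rho:=\mu(\varepsilon+\varepsilon_{noise})+(\mu+1)\varepsilon_{model},\quad\kappa=R/r.$$ For the idealized selection (minimizing $\operatorname{dist}(u_k^*(w),\mathcal M)$), the same bound holds with $\kappa=1$.
   Context: Let $V$ be a real Hilbert space with norm $\|\cdot\|$. Let $Y\subset\mathbb R^d$ be compact and let $y\mapsto u(y)$ be a continuous map from $Y$ to $V$. Set $\mathcal M=\{u(y):y\in Y\}$, which is compact. Let $W\subset V$ be a linear subspace of finite dimension $m$, let $P_W$ be the orthogonal projection onto $W$, and let $W^\perp$ be its orthogonal complement. For $w\in W$ put $V_w=w+W^\perp$. For $\sigma\ge 0$ define - $\mathcal M_\sigma=\{v\in V:\operatorname{dist}(v,\mathcal M)\le\sigma\}$; - $\delta_\sigma=\sup\{\|u-v\|: u,v\in\mathcal M_\sigma,\ u-v\in W^\perp\}$. For a finite-dimensional subspace $E\subset V$ let $\mu(E,W)=\sup_{v\in E\setminus\{0\}}\|v\|/\|P_Wv\|$, with the conventions $\mu(\{0\},W)=1$ and $\mu(E,W)=+\infty$ if $E\cap W^\perp\ne\{0\}$.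 A reduced model family consists of: - sets $\mathcal M_1,\dots,\mathcal M_K$ with $\mathcal M=\bigcup_{k=1}^K\mathcal M_k$; - affine spaces $V_k=\bar u_k+\bar V_k$, where $\bar u_k\in V$ and $\bar V_k$ is a linear subspace of dimension $n_k\le m$; - numbers $\varepsilon_k\ge\sup_{u\in\mathcal M_k}\operatorname{dist}(u,V_k)$; - constants $\mu_k=\mu(\bar V_k,W)<\infty$. The family is $(\varepsilon,\mu)$-admissible if $\varepsilon_k\le\varepsilon$ and $\mu_k\le\mu$ for all $k$. For $w\in W$ the PBDW estimators are $u_k^*(w)=\operatorname{argmin}\{\operatorname{dist}(v,V_k): v\in V_w\}$, $k=1,\dots,K$ (the minimizer is unique). A surrogate is a function $\mathcal S(\cdot,\mathcal M):V\to[0,\infty)$ with $r\operatorname{dist}(v,\mathcal M)\le\mathcal S(v,\mathcal M)\le R\operatorname{dist}(v,\mathcal M)$ for all $v\in V$, where $0<r\le R$ are constants; set $\kappa=R/r$. Surrogate model selection picks $k^*(w)$ as any minimizer of $k\mapsto\mathcal S(u_k^*(w),\mathcal M)$ over $\{1,\dots,K\}$ and sets $u^*(w)=u^*_{k^*(w)}(w)$. *)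

(* Defs.v *)
From HB Require Import structures.
From mathcomp Require Import all_boot all_order all_algebra.
From mathcomp Require Import all_classical all_reals all_analysis.
Set Implicit Arguments. Unset Strict Implicit. Unset Printing Implicit Defensive.
Import Order.TTheory GRing.Theory Num.Theory.
Import numFieldNormedType.Exports.
Local Open Scope classical_set_scope.
Local Open Scope ring_scope.

Section PBDWDefs.
Variables (R : realType) (V : normedModType R).

Definition is_inner (ip : V -> V -> R) :=
  [/\ forall x y, ip x y = ip y x,
      forall (a : R) x y z, ip (a *: x + y) z = a * ip x z + ip y z &
      forall x, `|x| ^+ 2 = ip x x].

Definition span n (b : 'I_n -> V) : set V :=
  [set v | exists c : 'I_n -> R, v = \sum_(i < n) c i *: b i].

Definition lin_indep n (b : 'I_n -> V) :=
  forall c : 'I_n -> R, \sum_(i < n) c i *: b i = 0 -> forall i, c i = 0.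

Definition is_subspace_dim (E : set V) (n : nat) :=
  exists b : 'I_n -> V, lin_indep b /\ E = span b.

Definition orth (ip : V -> V -> R) (W : set V) : set V :=
  [set v | forall w, W w -> ip v w = 0].

Definition is_orth_proj (ip : V -> V -> R) (W : set V) (P : V -> V) :=
  forall v, W (P v) /\ orth ip W (v - P v).

Definition affine (u0 : V) (E : set V) : set V := [set u0 + e | e in E].

(* distance (in extended reals; dist v set0 = +oo) *)
Definition dist (v : V) (S : set V) : \bar R :=
  ereal_inf [set (`|v - s|)%:E | s in S].

Definition fattening (M : set V) (sigma : R) : set V :=
  [set v | (dist v M <= sigma%:E)%E].

Definition delta (ip : V -> V -> R) (W M : set V) (sigma : R) : \bar R :=
  ereal_sup [set z | exists x y, [/\ fattening M sigma x, fattening M sigma y,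
                                     orth ip W (x - y) & z = (`|x - y|)%:E]].

Definition mu (ip : V -> V -> R) (W : set V) (PW : V -> V) (E : set V) : \bar R :=
  if `[< E = [set 0] >] then 1%E
  else if `[< exists v, [/\ E v, v <> 0 & orth ip W v] >] then +oo%E
  else ereal_sup [set (`|v| / `|PW v|)%:E | v in E `\ 0].

End PBDWDefs.

(* Main.v *)
Require Import Defs.
From HB Require Import structures.
From mathcomp Require Import all_boot all_order all_algebra.
From mathcomp Require Import all_classical all_reals all_analysis.
From mathcomp Require Import ring lra.
Set Implicit Arguments. Unset Strict Implicit. Unset Printing Implicit Defensive.
Import Order.TTheory GRing.Theory Num.Theory.
Import numFieldNormedType.Exports.
Local Open Scope classical_set_scope.
Local Open Scope ring_scope.

Section Z. Variable V : zmodType.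
Lemma Z1 (v p q : V) : p - q = v - q - (v - p).
Proof. by rewrite [in RHS]opprB [in RHS]addrC addrA subrK. Qed.
Lemma Z0 (m t z a b : V) : (m + t - z) + (z - a) + (a - b) = (m - b) + t.
Proof. by rewrite !addrA !subrK addrAC. Qed.
Lemma Z3 (m t z : V) : z - m = t - (m + t - z).
Proof. by rewrite opprB addrCA (addrC m) opprD addNKr. Qed.
Lemma Zxy (m t z a b : V) : (m + t - z) + (a - b) = (m - b) + t - (z - a).
Proof. by rewrite -(Z0 m t z a b) [in RHS](addrAC (m + t - z)) addrK. Qed.
Lemma Z4 (z h a g : V) : z + h - (a - g) = z - a + (h + g).
Proof. by rewrite opprB (addrC g) addrACA. Qed.
Lemma Z5 (m w q : V) : m + (w - q) - w = m - q.
Proof. by rewrite addrCA addrAC subrr add0r. Qed.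
Lemma Z6 (v z w : V) : v - z = (v - w) - (z - w).
Proof. by rewrite opprB addrA subrK. Qed.
Lemma Z7 (z w h : V) : z + h - w = (z - w) + h.
Proof. by rewrite addrAC. Qed.
End Z.

Section Aux.
Variables (R : realType) (V : normedModType R) (ip : V -> V -> R).
Hypothesis hip : is_inner ip.

Lemma ipC x y : ip x y = ip y x. Proof. by case: hip. Qed.
Lemma ipL a x y z : ip (a *: x + y) z = a * ip x z + ip y z. Proof. by case: hip. Qed.
Lemma ipN2 x : ip x x = `|x| ^+ 2. Proof. by case: hip => _ _ ->. Qed.

Lemma ip0l z : ip 0 z = 0.
Proof.
have := ipL 1 0 0 z; rewrite scale1r addr0 mul1r => h; lra.
Qed.
Lemma ipDl x y z : ip (x + y) z = ip x z + ip y z.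
Proof. by rewrite -[x in LHS]scale1r ipL mul1r. Qed.
Lemma ipZl a x z : ip (a *: x) z = a * ip x z.
Proof. by rewrite -[_ *: _]addr0 ipL ip0l addr0. Qed.
Lemma ipNl x z : ip (- x) z = - ip x z.
Proof. by rewrite -scaleN1r ipZl mulN1r. Qed.
Lemma ipBl x y z : ip (x - y) z = ip x z - ip y z.
Proof. by rewrite ipDl ipNl. Qed.
Lemma ipDr x y z : ip z (x + y) = ip z x + ip z y.
Proof. by rewrite ipC ipDl !(ipC z). Qed.
Lemma ipNr x z : ip z (- x) = - ip z x.
Proof. by rewrite ipC ipNl ipC. Qed.
Lemma ipBr x y z : ip z (x - y) = ip z x - ip z y.
Proof. by rewrite ipDr ipNr. Qed.
Lemma ipZr a x z : ip z (a *: x) = a * ip z x.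
Proof. by rewrite ipC ipZl ipC. Qed.
Lemma ip0r z : ip z 0 = 0.
Proof. by rewrite ipC ip0l. Qed.

Lemma normD2 x y : `|x + y| ^+ 2 = `|x| ^+ 2 + 2 * ip x y + `|y| ^+ 2.
Proof. rewrite -!ipN2 ipDl !ipDr (ipC y x); lra. Qed.

Lemma pythag x y : ip x y = 0 -> `|x + y| ^+ 2 = `|x| ^+ 2 + `|y| ^+ 2.
Proof. by move=> h; rewrite normD2 h mulr0 addr0. Qed.

Lemma ip0_eq0 x : ip x x = 0 -> x = 0.
Proof.
rewrite ipN2 => /eqP; rewrite sqrf_eq0 => /eqP; exact: normr0_eq0.
Qed.

Definition subsp (E : set V) := E 0 /\ forall a x y, E x -> E y -> E (a *: x + y).

Lemma subspD E x y : subsp E -> E x -> E y -> E (x + y).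
Proof. by case=> _ h ex ey; have := h 1 x y ex ey; rewrite scale1r. Qed.
Lemma subspZ E a x : subsp E -> E x -> E (a *: x).
Proof. by case=> h0 h ex; have := h a x 0 ex h0; rewrite addr0. Qed.
Lemma subspN E x : subsp E -> E x -> E (- x).
Proof. by move=> hE ex; rewrite -scaleN1r; apply: subspZ. Qed.
Lemma subspB E x y : subsp E -> E x -> E y -> E (x - y).
Proof. by move=> hE ex ey; apply: subspD => //; apply: subspN. Qed.

Lemma subsp_span n (b : 'I_n -> V) : subsp (Defs.span b).
Proof.
split.
  by exists (fun=> 0); rewrite big1 // => i _; rewrite scale0r.
move=> a x y [c ->] [c' ->].
exists (fun i => a * c i + c' i).
rewrite scaler_sumr -big_split /=; apply: eq_bigr => i _.
by rewrite scalerDl scalerA.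
Qed.

Lemma subsp_dim E n : is_subspace_dim E n -> subsp E.
Proof. by case=> b [_ ->]; apply: subsp_span. Qed.

Lemma subsp_orth W : subsp (orth ip W).
Proof.
split; first by move=> w _; rewrite ip0l.
by move=> a x y hx hy w hw; rewrite ipL hx // hy // mulr0 addr0.
Qed.

Lemma affineP (u0 : V) (E : set V) (v : V) : affine u0 E v <-> E (v - u0).
Proof.
split; first by case=> e he <-; rewrite addrC addKr.
by move=> h; exists (v - u0) => //; rewrite addrC subrK.
Qed.

Lemma dist_ge0 (v : V) (S : set V) : (0 <= dist v S)%E.
Proof. by apply: le_ereal_inf_tmp => _ [s _ <-]; rewrite lee_fin. Qed.

Lemma dist_le (v : V) (S : set V) s : S s -> (dist v S <= (`|v - s|)%:E)%E.
Proof. by move=> hs; apply: ereal_inf_lbound; exists s. Qed.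

Lemma dist_approx (v : V) (S : set V) x : (dist v S < x%:E)%E -> exists2 s, S s & `|v - s| < x.
Proof.
move=> /ereal_inf_lt [_ [s hs <-]]; rewrite lte_fin => h; by exists s.
Qed.

Lemma dist_real (v : V) (S : set V) s0 : S s0 -> exists D : R, dist v S = D%:E /\ 0 <= D.
Proof.
move=> hs; have h1 := dist_ge0 v S; have h2 := @dist_le v S s0 hs.
move: h1 h2; case: (dist v S) => [r||] //= h1 h2; exists r; split => //; by rewrite -lee_fin. Qed.


Lemma aorth p k (D d : R) : 0 <= D -> `|p| ^+ 2 <= D ^+ 2 + d ->
  (forall t : R, D <= `|p + t *: k|) -> ip p k ^+ 2 <= d * `|k| ^+ 2.
Proof.
move=> hD hp ht.
have [->|hk] := eqVneq k 0; first by rewrite ip0r normr0 !expr2 !mulr0.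
set N := `|k| ^+ 2; set I := ip p k.
have hN : 0 < N by rewrite /N exprn_gt0 // normr_gt0.
set t := - I / N.
have h1 := ht t.
have h2 : D ^+ 2 <= `|p + t *: k| ^+ 2.
  have h0 : 0 <= `|p + t *: k| by [].
  rewrite !expr2; nra.
have h3 : `|p + t *: k| ^+ 2 = `|p| ^+ 2 + 2 * (t * I) + t ^+ 2 * N.
  rewrite normD2 ipZr -(ipN2 (t *: k)) ipZl ipZr ipN2 -/I -/N.
  by rewrite expr2 mulrA.
have h4 : 2 * (t * I) + t ^+ 2 * N = - (I ^+ 2 / N).
  rewrite /t; field; lra.
have h5 : I ^+ 2 / N <= d by lra.
by rewrite ler_pdivrMr // in h5.
Qed.

Lemma sq_bound (a c : R) : 0 <= c -> a ^+ 2 <= c ^+ 2 -> a <= c /\ - c <= a.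
Proof. move=> hc h; rewrite !expr2 in h; split; nra. Qed.

End Aux.

Section Proj.
Variables (R : realType) (V : normedModType R) (ip : V -> V -> R).
Hypothesis hip : is_inner ip.
Variables (W : set V) (P : V -> V).
Hypothesis hWs : subsp W.
Hypothesis hP : is_orth_proj ip W P.

Lemma hO : subsp (orth ip W). Proof. exact: subsp_orth. Qed.

Lemma PWmem v : W (P v). Proof. by case: (hP v). Qed.
Lemma Porth v : orth ip W (v - P v). Proof. by case: (hP v). Qed.

Lemma orthW x y : orth ip W x -> W y -> ip x y = 0. Proof. by move=> h; apply: h. Qed.
Lemma Worth x y : orth ip W x -> W y -> ip y x = 0.
Proof. by move=> h hy; rewrite (ipC hip); apply: h. Qed.

Lemma Puniq v q : W q -> orth ip W (v - q) -> P v = q.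
Proof.
move=> hq ho; apply/eqP; rewrite -subr_eq0; apply/eqP.
apply: (ip0_eq0 hip).
have hd : W (P v - q) by apply: (subspB hWs) => //; apply: PWmem.
have ho' : orth ip W (P v - q).
  rewrite (Z1 v).
  by apply: (subspB hO) => //; apply: Porth.
exact: ho'.
Qed.

Lemma PD x y : P (x + y) = P x + P y.
Proof.
apply: Puniq; first by apply: (subspD hWs); apply: PWmem.
have -> : x + y - (P x + P y) = (x - P x) + (y - P y).
  by rewrite opprD addrACA.
by apply: (subspD hO); apply: Porth.
Qed.

Lemma PN x : P (- x) = - P x.
Proof.
apply: Puniq; first by apply: (subspN hWs); apply: PWmem.
rewrite opprK addrC -opprB; apply: (subspN hO); apply: Porth.
Qed.

Lemma PB x y : P (x - y) = P x - P y.
Proof. by rewrite PD PN. Qed.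

Lemma Pid x : W x -> P x = x.
Proof. move=> hx; apply: Puniq => //; rewrite subrr; exact: hO.1. Qed.

Lemma P0orth x : orth ip W x -> P x = 0.
Proof.
move=> hx; apply: Puniq; first exact: hWs.1.
by rewrite subr0.
Qed.

Lemma norm_decomp x : `|x| ^+ 2 = `|P x| ^+ 2 + `|x - P x| ^+ 2.
Proof.
rewrite -(pythag hip); first by rewrite addrC subrK.
by apply: Worth; [apply: Porth|apply: PWmem].
Qed.

Lemma normP_le x : `|P x| <= `|x|.
Proof.
have h := norm_decomp x.
have h1 : 0 <= `|P x| by [].
have h2 : 0 <= `|x| by [].
have h3 : 0 <= `|x - P x| ^+ 2 by apply: sqr_ge0.
nra.
Qed.

Lemma QD x y : (x + y) - P (x + y) = (x - P x) + (y - P y).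
Proof. by rewrite PD opprD addrACA. Qed.
Lemma QB x y : (x - y) - P (x - y) = (x - P x) - (y - P y).
Proof. by rewrite QD PN -opprD. Qed.
Lemma Qorth x : orth ip W x -> x - P x = x.
Proof. by move=> h; rewrite P0orth // subr0. Qed.
Lemma QW x : W x -> x - P x = 0.
Proof. by move=> h; rewrite Pid // subrr. Qed.

End Proj.

Section Key.
Variables (R : realType) (V : normedModType R) (ip : V -> V -> R).
Hypothesis hip : is_inner ip.
Variables (W : set V) (P : V -> V).
Hypothesis hWs : subsp W.
Hypothesis hP : is_orth_proj ip W P.
Variables (E : set V) (ub : V) (mu0 : R).
Hypothesis hE : subsp E.
Hypothesis hmu1 : 1 <= mu0.
Hypothesis hmu : forall y, E y -> `|y| <= mu0 * `|P y|.
Variables (w z : V).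
Hypothesis hw : W w.
Hypothesis hz : affine w (orth ip W) z.
Hypothesis hzmin : forall v, affine w (orth ip W) v ->
  (dist z (affine ub E) <= dist v (affine ub E))%E.

Let hOk : subsp (orth ip W) := hO hip W.

Lemma key_gamma m b (gam : R) : affine ub E b -> 0 < gam ->
  `|z - m| <= mu0 * (`|m - b| + `|w - P m|) +
               (1 + 2 * Num.sqrt (mu0 ^+ 2 - 1)) * gam.
Proof.
move=> hb hg.
have hm1 := hmu1.
set s := Num.sqrt (mu0 ^+ 2 - 1).
have hs0 : 0 <= s by apply: sqrtr_ge0.
have hs2 : s ^+ 2 = mu0 ^+ 2 - 1.
  rewrite sqr_sqrtr // subr_ge0 expr2.
  have h2 : 0 <= (mu0 - 1) * (mu0 - 1) by apply: mulr_ge0; lra.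
  nra.
set A := affine ub E.
have hub : A ub by apply/affineP; rewrite subrr; exact: hE.1.
have [D [hD hD0]] := dist_real z hub.
have [a ha hza] : exists2 a, A a & `|z - a| ^+ 2 <= D ^+ 2 + gam ^+ 2.
  have hlt : D < Num.sqrt (D ^+ 2 + gam ^+ 2).
    rewrite -{1}(ger0_norm hD0) -sqrtr_sqr ltr_sqrt; last first.
      by rewrite ltr_wpDl ?sqr_ge0 // exprn_gt0.
    by rewrite ltrDl exprn_gt0.
  have [a ha h] : exists2 a, A a & `|z - a| < Num.sqrt (D ^+ 2 + gam ^+ 2).
    by apply: dist_approx; rewrite hD lte_fin.
  exists a => //.
  have h0 : 0 <= `|z - a| by [].
  rewrite -(@sqr_sqrtr _ (D ^+ 2 + gam ^+ 2)); last first.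
    by rewrite addr_ge0 ?sqr_ge0.
  rewrite !expr2; nra.
set p := z - a.
have hk : forall h g, orth ip W h -> E g ->
    ip p (h + g) ^+ 2 <= gam ^+ 2 * `|h + g| ^+ 2.
  move=> h g hh hgE; apply: (aorth hip hD0 hza) => t.
  have h1 : affine w (orth ip W) (z + t *: h).
    apply/affineP; rewrite Z7; apply: (subspD hOk); first exact/affineP.
    exact: (subspZ t hOk hh).
  have h2 : A (a - t *: g).
    apply/affineP; rewrite Z7 -scaleNr; apply: (subspD hE); first exact/affineP.
    exact: (subspZ (- t) hE hgE).
  have := le_trans (hzmin h1) (dist_le (z + t *: h) h2).
  by rewrite hD lee_fin Z4 -scalerDr.
set r := m - b; set tau := w - P m; set x := m + tau - z; set y := a - b.
have htau : W tau by apply: (subspB hWs hw); apply: (PWmem hP).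
have hx : orth ip W x.
  rewrite /x (Z6 _ _ w); apply: (subspB hOk); last exact/affineP.
  by rewrite Z5; apply: Porth.
have hy : E y by rewrite /y (Z6 _ _ ub); apply: (subspB hE); apply/affineP.
have I0 : x + p + y = r + tau by rewrite /x /p /y /r Z0.
have F1 := norm_decomp hip hP r.
have F2 := norm_decomp hip hP y.
have hmy := hmu hy.
have F2' : `|y - P y| <= s * `|P y|.
  have h0 : 0 <= `|P y| by [].
  have h1 : 0 <= `|y| by [].
  have h3 : 0 <= `|y - P y| by [].
  have h4 : `|y| ^+ 2 <= mu0 ^+ 2 * `|P y| ^+ 2.
    rewrite !expr2; nra.
  have h5 : `|y - P y| ^+ 2 <= (s * `|P y|) ^+ 2.
    rewrite exprMn hs2; nra.
  have h6 : 0 <= s * `|P y| by apply: mulr_ge0.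
  rewrite !expr2 in h5; nra.
have F3 : `|p - P p| <= gam.
  have := hk (p - P p) 0 (Porth hP p) hE.1; rewrite addr0.
  have -> : ip p (p - P p) = `|p - P p| ^+ 2.
    have -> : ip p (p - P p) = ip ((p - P p) + P p) (p - P p) by rewrite subrK.
    by rewrite (ipDl hip) (ipN2 hip) (Worth hip (Porth hP p) (PWmem hP p)) addr0.
  move=> h.
  have h0 : 0 <= `|p - P p| by [].
  have h2 : `|p - P p| ^+ 2 <= gam ^+ 2.
    have [hq|hq] := ltrP 0 (`|p - P p| ^+ 2).
      by rewrite [X in X <= _]expr2 -(ler_pM2r hq).
    apply: (le_trans hq); exact: sqr_ge0.
  have hg0 := hg.
  rewrite !expr2 in h2; nra.
have I1 : P r + tau = P y + P p.
  have := congr1 P I0.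
  rewrite (PD hip hWs hP (x + p) y) (PD hip hWs hP x p) (PD hip hWs hP r tau).
  rewrite (P0orth hip hWs hP hx).
  by rewrite (Pid hip hWs hP htau) add0r addrC => <-.
have F4 : `|P y| <= `|P r + tau| + 2 * gam.
  have e1 : P y = - (y - P y) + y by rewrite opprB subrK.
  have := hk (- (y - P y)) y (subspN hOk (Porth hP y)) hy; rewrite -e1 => hq.
  have hq' : ip p (P y) ^+ 2 <= (gam * `|P y|) ^+ 2 by rewrite exprMn; exact: hq.
  have [_ hq2] := sq_bound (mulr_ge0 (ltW hg) (normr_ge0 (P y))) hq'.
  have e2 : `|P r + tau| ^+ 2 = `|P y| ^+ 2 + 2 * ip p (P y) + `|P p| ^+ 2.
    rewrite I1 (normD2 hip); congr (_ + _ * _ + _).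
    have -> : ip (P y) (P p) = ip (P y) (P p + (p - P p)) - ip (P y) (p - P p).
      by rewrite (ipDr hip) addrK.
    rewrite (Worth hip (Porth hP p) (PWmem hP y)) subr0 addrC subrK (ipC hip) //.
  have h0 : 0 <= `|P y| by [].
  have h1 : 0 <= `|P r + tau| by [].
  have h2 : 0 <= `|P p| ^+ 2 by apply: sqr_ge0.
  rewrite !expr2 in e2 h2.
  nra.
have F5 : `|P r + tau| <= `|P r| + `|tau| by apply: ler_normD.
have F6 : `|x| <= `|r - P r| + `|p - P p| + s * `|P y|.
  have e : x + (y - P y) = (r - P r) - (p - P p).
    rewrite -{1}(Qorth hip hWs hP hx) -(QD hip hWs hP).
    have -> : x + y = r + tau - p by rewrite /x /y /r /p Zxy.
    by rewrite (QB hip hWs hP) (QD hip hWs hP) (QW hip hWs hP htau) addr0.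
  have -> : x = (x + (y - P y)) - (y - P y) by rewrite addrK.
  rewrite e.
  apply: (le_trans (ler_normB _ _)).
  have := ler_normB (r - P r) (p - P p).
  lra.
have F7 : `|z - m| ^+ 2 = `|tau| ^+ 2 + `|x| ^+ 2.
  rewrite (Z3 m tau z) -/x (normD2 hip) (ipNr hip) (Worth hip hx htau) normrN; lra.
have hr2 : `|r| ^+ 2 = `|P r| ^+ 2 + `|r - P r| ^+ 2 := F1.
set al := `|r - P r| in F6 hr2 *; set be := `|P r| in F5 hr2 *; set c := `|tau| in F5 F7 *.
set B := `|P y| in F4 F6 *.
set nx := `|x| in F6 F7 *; set nr := `|r| in hr2 *; set pp := `|p - P p| in F3 F6 *.
have hal : 0 <= al by exact: normr_ge0. have hbe : 0 <= be by exact: normr_ge0. have hc : 0 <= c by exact: normr_ge0.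
have hB : 0 <= B by exact: normr_ge0. have hnx : 0 <= nx by exact: normr_ge0. have hnr : 0 <= nr by exact: normr_ge0.
have hpp : 0 <= pp by exact: normr_ge0.
have L1 : al + s * be <= mu0 * nr.
  have hsq : (al + s * be) ^+ 2 <= (mu0 * nr) ^+ 2.
    rewrite exprMn hr2 -/al -/be.
    have : 0 <= (s * al - be) ^+ 2 by apply: sqr_ge0.
    rewrite !expr2 in hs2 * => hh; nra.
  have h0 : 0 <= mu0 * nr by apply: mulr_ge0 => //; lra.
  have h1 : 0 <= al + s * be by apply: addr_ge0 => //; apply: mulr_ge0.
  rewrite !expr2 in hsq; nra.
have L2 : nx <= mu0 * nr + (1 + 2 * s) * gam + s * c.
  have : s * B <= s * (be + c + 2 * gam).
    apply: ler_wpM2l => //; lra.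
  lra.
have hs_mu : s <= mu0.
  have h0 : s ^+ 2 <= mu0 ^+ 2 by rewrite hs2; lra.
  rewrite !expr2 in h0; nra.
set X := mu0 * nr + (1 + 2 * s) * gam.
have hX : 0 <= X.
  apply: addr_ge0; first by apply: mulr_ge0 => //; lra.
  apply: mulr_ge0; last lra.
  have : 0 <= 2 * s by apply: mulr_ge0.
  lra.
have L3 : `|z - m| ^+ 2 <= (X + mu0 * c) ^+ 2.
  rewrite F7.
  have h1 : nx ^+ 2 <= (X + s * c) ^+ 2.
    have h2 : 0 <= nx by exact: normr_ge0.
    have L2' : nx <= X + s * c by rewrite /X; lra.
    have hY : 0 <= X + s * c by apply: addr_ge0 => //; apply: mulr_ge0.
    rewrite !expr2; nra.
  have hh1 : 0 <= X * c * (mu0 - s) by apply: mulr_ge0; [apply: mulr_ge0|lra].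
  have hh2 : s ^+ 2 * (c * c) = (mu0 ^+ 2 - 1) * (c * c) by rewrite hs2.
  rewrite !expr2 in h1 hh2 *; nra.
have hzm : 0 <= `|z - m| by [].
have hfin : `|z - m| <= X + mu0 * c.
  have hY : 0 <= X + mu0 * c by apply: addr_ge0 => //; apply: mulr_ge0 => //; lra.
  rewrite !expr2 in L3; nra.
rewrite /X in hfin.
have -> : mu0 * (`|m - b| + `|w - P m|) + (1 + 2 * s) * gam = X + mu0 * c.
  by rewrite /X /c /tau -/nr; ring.
exact: hfin.
Qed.

Lemma key m b : affine ub E b -> `|z - m| <= mu0 * (`|m - b| + `|w - P m|).
Proof.
move=> hb; apply/ler_addgt0Pr => e he.
have hm1 := hmu1.
set C := 1 + 2 * Num.sqrt (mu0 ^+ 2 - 1).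
have hC : 0 < C.
  have : 0 <= Num.sqrt (mu0 ^+ 2 - 1) by apply: sqrtr_ge0.
  rewrite /C; lra.
have := @key_gamma m b (e / C) hb (divr_gt0 he hC).
by rewrite -/C [C * _]mulrC divfK // gt_eqF.
Qed.

End Key.

Lemma mu_bound (R : realType) (V : normedModType R) (ip : V -> V -> R)
  (W : set V) (P : V -> V) (hP : is_orth_proj ip W P) (E : set V) (mu0 : R) :
  (mu ip W P E < +oo)%E -> (mu ip W P E <= mu0%:E)%E -> 0 <= mu0 ->
  forall y, E y -> `|y| <= mu0 * `|P y|.
Proof.
move=> hlt hle h0 y hy.
have [->|hy0] := eqVneq y 0; first by rewrite normr0; apply: mulr_ge0.
move: hlt hle; rewrite /mu.
case: asboolP => [HE|_].
  by rewrite HE in hy; move: hy0; rewrite hy eqxx.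
case: asboolP => [_|Hn]; first by rewrite ltxx.
move=> _ hsup.
have hPy : P y != 0.
  apply/eqP => hP0; apply: Hn; exists y; split => //; first exact/eqP.
  by have := Porth hP y; rewrite hP0 subr0.
have h1 : ((`|y| / `|P y|)%:E <= mu0%:E)%E.
  apply: le_trans hsup; apply: ereal_sup_ubound; exists y => //; split => //.
  by move=> /= h; move: hy0; rewrite h eqxx.
by rewrite lee_fin ler_pdivrMr ?normr_gt0 // in h1.
Qed.

Lemma dist_lip (R : realType) (V : normedModType R) (S : set V) (x y : V) (Dx Dy : R) :
  dist x S = Dx%:E -> dist y S = Dy%:E -> Dx <= Dy + `|x - y|.
Proof.
move=> hx hy; apply/ler_addgt0Pr => e he.
have [s hs hys] : exists2 s, S s & `|y - s| < Dy + e.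
  by apply: dist_approx; rewrite hy lte_fin ltrDl.
have := dist_le x hs; rewrite hx lee_fin => h1.
have := ler_distD y x s.
lra.
Qed.

Unset Implicit Arguments.
Set Strict Implicit.

Theorem theorem3p5
  (R : realType) (V : completeNormedModType R)
  (ip : V -> V -> R) (hip : is_inner ip)
  (d : nat) (Y : set 'rV[R]_d) (hY : compact Y)
  (uy : 'rV[R]_d -> V) (huy : {within Y, continuous uy})
  (M : set V) (hMdef : M = uy @` Y)
  (m : nat) (W : set V) (hW : is_subspace_dim W m)
  (PW : V -> V) (hPW : is_orth_proj ip W PW)
  (K : nat) (Mk : 'I_K -> set V) (hMk : M = \bigcup_(k in [set: 'I_K]) Mk k)
  (ubar : 'I_K -> V) (n : 'I_K -> nat) (Vbar : 'I_K -> set V)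
  (hVbar : forall k, is_subspace_dim (Vbar k) (n k))
  (hn : forall k, (n k <= m)%N)
  (epsk : 'I_K -> R)
  (hepsk : forall k,
     (ereal_sup [set dist x (affine (ubar k) (Vbar k)) | x in Mk k] <= (epsk k)%:E)%E)
  (hmuk : forall k, (mu ip W PW (Vbar k) < +oo)%E)
  (eps mu0 : R) (heps : 0 < eps) (hmu0 : 1 <= mu0)
  (hadm : forall k, epsk k <= eps /\ (mu ip W PW (Vbar k) <= mu0%:E)%E)
  (ustar : 'I_K -> V -> V)
  (hustar : forall k w, W w ->
     affine w (orth ip W) (ustar k w) /\
     (forall v, affine w (orth ip W) v ->
        (dist (ustar k w) (affine (ubar k) (Vbar k))
         <= dist v (affine (ubar k) (Vbar k)))%E))
  (S : V -> R) (r_lo r_hi : R) (hr_lo : 0 < r_lo) (hr : r_lo <= r_hi)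
  (hS : forall v, [/\ 0 <= S v, (r_lo%:E * dist v M <= (S v)%:E)%E
                                & ((S v)%:E <= r_hi%:E * dist v M)%E])
  (u : V) (eps_model eps_noise : R) (hu : (dist u M <= eps_model%:E)%E)
  (eta : V) (heta : W eta) (heta_le : `|eta| <= eps_noise) :
  let w := PW u + eta in
  let rho := mu0 * (eps + eps_noise) + (mu0 + 1) * eps_model in
  (forall kstar : 'I_K, (forall k, S (ustar kstar w) <= S (ustar k w)) ->
     ((`|u - ustar kstar w|)%:E <= delta ip W M ((r_hi / r_lo) * rho) + eps_noise%:E)%E)
  /\
  (forall kstar : 'I_K, (forall k, (dist (ustar kstar w) M <= dist (ustar k w) M)%E) ->
     ((`|u - ustar kstar w|)%:E <= delta ip W M (1 * rho) + eps_noise%:E)%E).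
Proof.
move=> w rho.
have hWs : subsp W := subsp_dim hW.
have hwW : W w by apply: (subspD hWs) => //; apply: (PWmem hPW).
have hmod0 : 0 <= eps_model.
  by rewrite -lee_fin; apply: le_trans hu; apply: dist_ge0.
have hno0 : 0 <= eps_noise by apply: le_trans heta_le.
have [m0 hm0 _] : exists2 m0, M m0 & `|u - m0| < eps_model + 1.
  by apply: dist_approx; apply: (le_lt_trans hu); rewrite lte_fin ltrDl.
have claim : forall del, 0 < del -> exists k, exists Dk : R,
    dist (ustar k w) M = Dk%:E /\ Dk <= rho + del.
  move=> del hdel.
  set d1 := del / (2 * mu0).
  have hd1 : 0 < d1 by apply: divr_gt0 => //; lra.
  have [mm hmm humm] : exists2 mm, M mm & `|u - mm| < eps_model + d1.
    by apply: dist_approx; apply: (le_lt_trans hu); rewrite lte_fin ltrDl.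
  have hmm' := hmm; rewrite hMk in hmm'; case: hmm' => k _ hmk.
  set A := affine (ubar k) (Vbar k).
  have hdk : (dist mm A <= eps%:E)%E.
    have h1 : (dist mm A <= (epsk k)%:E)%E.
      by apply: le_trans (hepsk k); apply: ereal_sup_ubound; exists mm.
    by apply: le_trans h1 _; rewrite lee_fin; case: (hadm k).
  have [b hb hmb] : exists2 b, A b & `|mm - b| < eps + d1.
    by apply: dist_approx; apply: (le_lt_trans hdk); rewrite lte_fin ltrDl.
  have hmuk' : forall y, Vbar k y -> `|y| <= mu0 * `|PW y|.
    apply: (mu_bound hPW (hmuk k) (hadm k).2); lra.
  have hk := key hip hWs hPW (subsp_dim (hVbar k)) hmu0 hmuk' hwW
    (hustar k w hwW).1 (hustar k w hwW).2 mm hb.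
  have hwp : `|w - PW mm| <= `|u - mm| + eps_noise.
    have -> : w - PW mm = PW (u - mm) + eta.
      by rewrite /w (PB hip hWs hPW) addrAC.
    apply: (le_trans (ler_normD _ _)).
    have := normP_le hip hPW (u - mm).
    lra.
  have [Dk [hDk hDk0]] := dist_real (ustar k w) hmm.
  exists k, Dk; split => //.
  have h1 : Dk <= `|ustar k w - mm|.
    by rewrite -lee_fin -hDk; apply: dist_le.
  have h2 : mu0 * (`|mm - b| + `|w - PW mm|) <=
            mu0 * (eps + d1 + (eps_model + d1 + eps_noise)).
    apply: ler_wpM2l; lra.
  have h3 : mu0 * (eps + d1 + (eps_model + d1 + eps_noise)) <= rho + del.
    have e1 : d1 * (2 * mu0) = del.
      by rewrite /d1 divfK //; apply: lt0r_neq0; lra.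
    have e2 : 0 <= mu0 * eps_model by apply: mulr_ge0; lra.
    rewrite /rho; nra.
  lra.
have fin : forall us sig, affine w (orth ip W) us -> eps_model + eps_noise <= sig ->
    (forall e, 0 < e -> exists D : R, dist us M = D%:E /\ D <= sig + e) ->
    ((`|u - us|)%:E <= delta ip W M sig + eps_noise%:E)%E.
  move=> us sig hus hsig hD.
  set ut := u + eta.
  have [Du [hDu _]] := dist_real u hm0.
  have [Dt [hDt _]] := dist_real ut hm0.
  have [Ds [hDs _]] := dist_real us hm0.
  have hfu : fattening M sig ut.
    rewrite /fattening /= hDt lee_fin.
    have := dist_lip hDt hDu; rewrite /ut (addrC u eta) addrK.
    have : Du <= eps_model by rewrite -lee_fin -hDu.
    lra.
  have hfs : fattening M sig us.
    rewrite /fattening /= hDs lee_fin.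
    apply/ler_addgt0Pr => e he.
    have [D' [hD' hD'le]] := hD e he.
    by move: hD'; rewrite hDs => -[->].
  have horth : orth ip W (ut - us).
    rewrite (Z6 _ _ w); apply: (subspB (hO hip W)); last exact/affineP.
    by rewrite /ut /w opprD addrACA subrr addr0; apply: (Porth hPW).
  have h1 : ((`|ut - us|)%:E <= delta ip W M sig)%E.
    by apply: ereal_sup_ubound; exists ut, us; split.
  have h2 : `|u - us| <= `|ut - us| + eps_noise.
    have -> : u - us = (ut - us) - eta by rewrite /ut addrAC addrK.
    apply: (le_trans (ler_normB _ _)); lra.
  apply: (@le_trans _ _ ((`|ut - us| + eps_noise)%:E)); first by rewrite lee_fin.
  by rewrite EFinD; apply: leeD.
have hrho : eps_model + eps_noise <= rho.
  rewrite /rho; nra.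
have hrho0 : 0 <= rho by lra.
split.
- move=> ks hks.
  have [ak hak] := hustar ks w hwW.
  apply: fin => //.
    have : 1 <= r_hi / r_lo by rewrite ler_pdivlMr // mul1r.
    nra.
  move=> e he.
  have [Ds [hDs hDs0]] := dist_real (ustar ks w) hm0.
  exists Ds; split => //.
  have hepos : 0 < e * r_lo / r_hi by apply: divr_gt0; [apply: mulr_gt0|lra].
  have [k [Dk [hDk hDkle]]] := claim (e * r_lo / r_hi) hepos.
  have [_ hl _] := hS (ustar ks w).
  have [_ _ hh] := hS (ustar k w).
  have := hks k.
  rewrite hDs -EFinM lee_fin in hl.
  rewrite hDk -EFinM lee_fin in hh.
  move=> hk.
  have h1 : r_lo * Ds <= r_hi * (rho + e * r_lo / r_hi).
    apply: (le_trans hl); apply: (le_trans hk); apply: (le_trans hh).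
    apply: ler_wpM2l; lra.
  have e3 : r_hi * (rho + e * r_lo / r_hi) = r_lo * (r_hi / r_lo * rho + e).
    field; apply/andP; split; apply: lt0r_neq0 => //; lra.
  by rewrite e3 ler_pM2l in h1.
- move=> ks hks.
  have [ak hak] := hustar ks w hwW.
  apply: fin => //; first by rewrite mul1r.
  move=> e he.
  have [Ds [hDs hDs0]] := dist_real (ustar ks w) hm0.
  exists Ds; split => //.
  have [k [Dk [hDk hDkle]]] := claim e he.
  have := hks k; rewrite hDs hDk lee_fin mul1r.
  lra.
Qed.
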